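(* Let $n$ be such that $n/2$ is odd, let $\Omega\subseteq\mathbb{R}^n$ be open, let $v$ be a scalar-valued function on $\Omega$, let $\lambda\in\mathbb{C}\setminus\{0\}$, and let $\underline{f}$ be a vector-valued solution of the Clifford Riccati equation $\partial_{\underline{x}}\underline{f}+\underline{f}^2=v$. Then any scalar-valued solution $\phi$ of the Schrödinger equation $(-\Delta_n-v)\phi=\lambda^2\phi$ can be uniquely represented as $\phi=g+h$, where $g$ and $h$ are $\mathbb{C}_n$-valued solutions of \[\left(\partial_{\underline{x}}-M^{\underline{f}+\lambda ie_N}\right)g=0\quad\text{and}\quad\left(\partial_{\underline{x}}-M^{\underline{f}-\lambda ie_N}\right)h=0\] respectively.
   Context: $\mathbb{R}_{0,n}$ is the real Clifford algebra generated by an orthonormal basis $e_1,\dots,e_n$ of $\mathbb{R}^n$ with relations $e_je_k+e_ke_j=-2\delta_{jk}$; $\mathbb{C}_n=\mathbb{R}_{0,n}\otimes\mathbb{C}$, with $i$ the complex unit. $e_N=e_1e_2\cdots e_n$ is the pseudo-scalar. The Dirac operator is $\partial_{\underline{x}}=\sum_{j=1}^n e_j\partial_{x_j}$, acting from the left; $\Delta_n=-\partial_{\underline{x}}^2$ is the Laplacian. For a function $F$, $M^F$ is right multiplication: $M^Fg=gF$. *)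

(* Defs.v *)
From HB Require Import structures.
From mathcomp Require Import all_boot all_order all_algebra.
From mathcomp Require Import all_classical all_reals all_analysis.
From mathcomp Require Import complex.
Set Implicit Arguments. Unset Strict Implicit. Unset Printing Implicit Defensive.
Import Order.TTheory GRing.Theory Num.Theory.
Import numFieldNormedType.Exports.
Local Open Scope ring_scope.


Notation Cl R n := {ffun {set 'I_n} -> complex R}.
Notation V R n := 'rV[R]_n.

Section Clifford.
Variables (R : realType) (n : nat).

Local Notation C := (complex R).

(* C_n: coefficients on the basis blades e_A, A a subset of {1..n}. *)
Local Notation Cl := {ffun {set 'I_n} -> C}.

(* e_A e_B = clsign A B e_(A Δ B) *)
Definition clsign (A B : {set 'I_n}) : C :=
  (-1) ^+ (#|[set p : 'I_n * 'I_n | (p.1 \in A) && (p.2 \in B) && (p.2 < p.1)%N]|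
           + #|A :&: B|).

Definition symd (A B : {set 'I_n}) := (A :\: B) :|: (B :\: A).

Definition clmul (x y : Cl) : Cl :=
  [ffun D => \sum_(A : {set 'I_n}) clsign A (symd A D) * x A * y (symd A D)].

Definition blade (A : {set 'I_n}) (c : C) : Cl := [ffun B => if B == A then c else 0].
Definition cl_scalar (c : C) : Cl := blade finset.set0 c.
Definition eN : Cl := blade [set: 'I_n] 1.

Definition is_scalar (x : Cl) := forall A : {set 'I_n}, A != finset.set0 -> x A = 0.
Definition is_vector (x : Cl) := forall A : {set 'I_n}, #|A| != 1%N -> x A = 0.

Local Notation V := 'rV[R]_n.
Definition ej (j : 'I_n) : V := \row_k (k == j)%:R.

Definition pdR (j : 'I_n) (u : V -> R) (x : V) : R := 'D_(ej j) u x.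

Fixpoint CkR (k : nat) (O : set V) (u : V -> R) : Prop :=
  match k with
  | 0 => forall x, O x -> {for x, continuous u}
  | k'.+1 => (forall x, O x -> {for x, continuous u}) /\
             forall j, (forall x, O x -> derivable u x (ej j)) /\ CkR k' O (pdR j u)
  end.

Definition smoothR (O : set V) (u : V -> R) := forall k, CkR k O u.
Definition smoothC (O : set V) (u : V -> C) :=
  smoothR O (fun x => @complex.Re R (u x)) /\ smoothR O (fun x => @complex.Im R (u x)).
Definition smoothCl (O : set V) (F : V -> Cl) := forall A, smoothC O (fun x => F x A).

Definition pdC (j : 'I_n) (u : V -> C) (x : V) : C :=
  Complex (pdR j (fun y => @complex.Re R (u y)) x) (pdR j (fun y => @complex.Im R (u y)) x).
Definition pdCl (j : 'I_n) (F : V -> Cl) (x : V) : Cl := [ffun A => pdC j (fun y => F y A) x].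

Definition dirac_op (F : V -> Cl) (x : V) : Cl :=
  \sum_(j < n) clmul (blade [set j] 1) (pdCl j F x).
Definition laplacian (F : V -> Cl) (x : V) : Cl := - dirac_op (dirac_op F) x.
(* M^G F = F G *)
Definition rmul (G : V -> Cl) (F : V -> Cl) (x : V) : Cl := clmul (F x) (G x).

Definition iC : C := Complex 0 1.
Definition lam_i_eN (lam : C) : Cl := clmul (cl_scalar (lam * iC)) eN.
Definition solves_DM (O : set V) (F : V -> Cl) (g : V -> Cl) :=
  forall x, O x -> dirac_op g x - rmul F g x = 0.
Definition decomposition (O : set V) (f : V -> Cl) (lam : C) (phi : V -> C)
    (g h : V -> Cl) :=
  [/\ smoothCl O g, smoothCl O h,
      solves_DM O (fun y => f y + lam_i_eN lam) g,
      solves_DM O (fun y => f y - lam_i_eN lam) h &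
      forall x, O x -> cl_scalar (phi x) = g x + h x].
End Clifford.

Arguments cl_scalar {R n} c.
Arguments eN {R n}.
Arguments iC {R}.
Arguments lam_i_eN {R n} lam.
Arguments ej {R n} j.
Arguments blade {R n} A c.

(* Main.v *)
Require Import Defs.
From HB Require Import structures.
From mathcomp Require Import all_boot all_order all_algebra.
From mathcomp Require Import all_classical all_reals all_analysis.
From mathcomp Require Import complex.
From mathcomp Require Import zify ring.
Import Order.TTheory GRing.Theory Num.Theory.
Import numFieldNormedType.Exports.
Local Open Scope ring_scope.
Set Implicit Arguments. Unset Strict Implicit. Unset Printing Implicit Defensive.


Section Alg.
Variables (R : realType) (n : nat).
Local Notation C := (complex R).
Local Notation Cl := {ffun {set 'I_n} -> C}.
Implicit Types A B D E : {set 'I_n}.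
Local Notation clsign := (@clsign R n).
Local Notation blade := (@blade R n).

Lemma in_symd A B (x : 'I_n) : (x \in symd A B) = (x \in A) (+) (x \in B).
Proof. by rewrite /symd !inE; case: (x \in A); case: (x \in B). Qed.

Lemma symdK A B : symd A (symd A B) = B.
Proof. by apply/setP => x; rewrite !in_symd addKb. Qed.
Lemma symdC A B : symd A B = symd B A.
Proof. by apply/setP => x; rewrite !in_symd addbC. Qed.
Lemma symdA A B D : symd A (symd B D) = symd (symd A B) D.
Proof. by apply/setP => x; rewrite !in_symd addbA. Qed.
Lemma symd0 A : symd A finset.set0 = A.
Proof. by apply/setP => x; rewrite !in_symd inE addbF. Qed.
Lemma sym0d A : symd finset.set0 A = A.
Proof. by rewrite symdC symd0. Qed.
Lemma symdd A : symd A A = finset.set0.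
Proof. by apply/setP => x; rewrite !in_symd inE addbb. Qed.

Lemma odd_card_symd (T : finType) (X Y : {set T}) :
  odd #|(X :\: Y) :|: (Y :\: X)| = odd #|X| (+) odd #|Y|.
Proof.
have h1 : #|(X :\: Y) :|: (Y :\: X)| = #|X :\: Y| + #|Y :\: X|.
  rewrite cardsU; suff -> : (X :\: Y) :&: (Y :\: X) = finset.set0 by rewrite cards0 subn0.
  by apply/setP => x; rewrite !inE; case: (x \in X); case: (x \in Y).
have h2 := cardsID Y X. have h3 := cardsID X Y.
have h4 : #|X :&: Y| = #|Y :&: X| by rewrite finset.setIC.
have : (#|(X :\: Y) :|: (Y :\: X)| + #|X :&: Y|.*2 = #|X| + #|Y|)%N.
  by rewrite h1 -addnn -h2 -h3 h4; lia.
move=> /(congr1 odd); rewrite !oddD odd_double addbF => ->. by [].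
Qed.

Definition inv A B := #|[set p : 'I_n * 'I_n | (p.1 \in A) && (p.2 \in B) && (p.2 < p.1)%N]|.

Lemma clsign_inv A B : clsign A B = (-1) ^+ (inv A B + #|A :&: B|).
Proof. by []. Qed.

Lemma clsignE A B : clsign A B = (-1) ^+ (odd (inv A B) (+) odd #|A :&: B|).
Proof. by rewrite /clsign -signr_odd oddD. Qed.

Lemma inv_symdl A B D : odd (inv (symd A B) D) = odd (inv A D) (+) odd (inv B D).
Proof.
rewrite /inv -odd_card_symd; congr odd; apply: eq_card => p.
by rewrite !(inE, in_symd); case: (p.1 \in A); case: (p.1 \in B); case: (p.2 \in D); case: (_ < _)%N.
Qed.
Lemma inv_symdr A B D : odd (inv A (symd B D)) = odd (inv A B) (+) odd (inv A D).
Proof.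
rewrite /inv -odd_card_symd; congr odd; apply: eq_card => p.
by rewrite !(inE, in_symd); case: (p.1 \in A); case: (p.2 \in B); case: (p.2 \in D); case: (_ < _)%N.
Qed.
Lemma capsymdl A B D : odd #|symd A B :&: D| = odd #|A :&: D| (+) odd #|B :&: D|.
Proof.
rewrite -odd_card_symd; congr odd; apply: eq_card => p.
by rewrite !(inE, in_symd); case: (p \in A); case: (p \in B); case: (p \in D).
Qed.
Lemma capsymdr A B D : odd #|A :&: symd B D| = odd #|A :&: B| (+) odd #|A :&: D|.
Proof.
rewrite -odd_card_symd; congr odd; apply: eq_card => p.
by rewrite !(inE, in_symd); case: (p \in A); case: (p \in B); case: (p \in D).
Qed.

Lemma cocycle A B D :
  clsign A B * clsign (symd A B) D = clsign A (symd B D) * clsign B D.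
Proof.
rewrite !clsignE -!exprD -signr_odd -[in RHS]signr_odd; congr (_ ^+ nat_of_bool _).
rewrite !oddD inv_symdl inv_symdr capsymdl capsymdr.
by case: (odd (inv A B)); case: (odd (inv A D)); case: (odd (inv B D));
  case: (odd #|A :&: B|); case: (odd #|A :&: D|); case: (odd #|B :&: D|).
Qed.

Lemma clmulA (x y z : Cl) : clmul (clmul x y) z = clmul x (clmul y z).
Proof.
apply/ffunP => D; rewrite !ffunE.
under eq_bigr => A _ do rewrite ffunE mulr_sumr mulr_suml.
rewrite exchange_big /=; apply: eq_bigr => B _.
rewrite ffunE mulr_sumr (reindex_inj (can_inj (symdK B))) /=.
apply: eq_bigr => E _.
rewrite symdK.
have e1 : symd E (symd B D) = symd (symd B E) D by rewrite symdA (symdC E B).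
have e2 : symd E (symd (symd B E) D) = symd B D by rewrite -e1 symdK.
have h := cocycle B E (symd (symd B E) D).
rewrite e2 in h. rewrite e1.
transitivity (clsign B E * clsign (symd B E) (symd (symd B E) D) * x B * y E * z (symd (symd B E) D)).
  by ring.
by rewrite h; ring.
Qed.

Lemma card_setE (T : finType) (P : pred T) : #|[set p | P p]| = (\sum_p (P p : nat))%N.
Proof. rewrite -sum1_card big_mkcond /=; apply: eq_bigr => p _; rewrite inE; by case: (P p). Qed.

Lemma inv_sum A B : inv A B = (\sum_(i < n) \sum_(j < n) ((i \in A) && (j \in B) && (j < i)%N : nat))%N.
Proof. by rewrite /inv card_setE pair_bigA. Qed.

Lemma sum1_ordn : (\sum_(i < n) 1 = n)%N.
Proof. by rewrite sum1_card card_ord. Qed.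

Lemma sum_eqk (k : 'I_n) : (\sum_(i < n) (i == k : nat) = 1)%N.
Proof. by rewrite (bigD1 k) //= eqxx big1 // => i /negPf ->. Qed.

Lemma sum_lt_gt : ((\sum_(i < n) \sum_(j < n) (j < i)%N : nat).*2 + n = n * n)%N.
Proof.
have e1 : (\sum_(i < n) \sum_(j < n) (j < i)%N : nat)%N = (\sum_(i < n) \sum_(j < n) (i < j)%N : nat)%N.
  by rewrite exchange_big.
have e2 : (\sum_(i < n) \sum_(j < n) (i == j : nat) = n)%N.
  rewrite -[in RHS]sum1_ordn; apply: eq_bigr => i _.
  by rewrite (bigD1 i) //= eqxx big1 // => j; rewrite eq_sym => /negPf ->.
have e3 : (\sum_(i<n) \sum_(j<n) ((j<i)%N + (i<j)%N + (i==j)) = n*n)%N.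
  transitivity (\sum_(i<n) n)%N.
    apply: eq_bigr => i _; rewrite -[RHS]sum1_ordn; apply: eq_bigr => j _; rewrite -val_eqE /=; by case: (ltngtP i j).
  by rewrite sum_nat_const card_ord.
have e4 : (\sum_(i<n)\sum_(j<n) (j<i)%N + \sum_(i<n)\sum_(j<n) (i<j)%N + \sum_(i<n)\sum_(j<n) (i==j) = n*n)%N.
  rewrite -e3 -!big_split; apply: eq_bigr => i _; by rewrite -!big_split.
by rewrite -e4 e2 -e1 addnn.
Qed.

Definition TT : {set 'I_n} := [set: 'I_n].

Lemma sign_TT : ~~ odd n -> odd n./2 -> clsign TT TT = -1.
Proof.
move=> hev hodd.
have hn := even_halfK hev.
rewrite clsign_inv /TT finset.setIid cardsT card_ord.
have -> : inv [set: 'I_n] [set: 'I_n] = (\sum_(i < n) \sum_(j < n) (j < i)%N : nat)%N.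
  by rewrite inv_sum; apply: eq_bigr => i _; apply: eq_bigr => j _; rewrite !finset.in_setT.
have := sum_lt_gt.
set s := (\sum_(i < n) _)%N; set m := n./2 in hn hodd *.
rewrite -hn => h.
have -> : (s + m.*2 = m * m * 2 + m)%N.
  rewrite -!muln2 in h *; nia.
by rewrite -signr_odd oddD oddM /= andbF /= hodd expr1.
Qed.

Lemma sign_kT (k : 'I_n) : ~~ odd n -> clsign [set k] TT = - clsign TT [set k].
Proof.
move=> hev.
have hn : (0 < n)%N by case: n k => [[]|].
have e1 : inv [set k] TT = (\sum_(j < n) (j < k)%N : nat)%N.
  rewrite inv_sum (bigD1 k) //= [X in (_ + X)%N]big1 ?addn0; last first.
    by move=> i /negPf hik; apply: big1 => j _; rewrite finset.in_set1 hik.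
  by apply: eq_bigr => j _; rewrite finset.in_set1 eqxx finset.in_setT.
have e2 : inv TT [set k] = (\sum_(i < n) (k < i)%N : nat)%N.
  rewrite inv_sum; apply: eq_bigr => i _.
  rewrite (bigD1 k) //= big1 ?addn0; last by move=> j /negPf hjk; rewrite finset.in_set1 hjk andbF.
  by rewrite finset.in_set1 eqxx finset.in_setT.
have e3 : (inv [set k] TT + inv TT [set k] = n.-1)%N.
  have h1 := sum_eqk k.
  have h2 : (\sum_(i<n) (((i<k)%N + (k<i)%N) + (i==k)) = n)%N.
    rewrite -[RHS]sum1_ordn; apply: eq_bigr => i _; rewrite -val_eqE /=; by case: (ltngtP i k).
  rewrite e1 e2 -big_split /=; move: h2; rewrite big_split /= h1 => h2; lia.
have ho : odd (inv [set k] TT) = ~~ odd (inv TT [set k]).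
  have := congr1 odd e3; rewrite oddD.
  have -> : odd n.-1 = true.
    by case: n hev hn {k e1 e2 e3} => // m; rewrite /= negbK.
  by case: (odd (inv [set k] TT)); case: (odd (inv TT [set k])).
rewrite !clsign_inv /TT finset.setIT finset.setTI cards1 -[X in X = _]signr_odd -[X in _ = - X]signr_odd !oddD ho.
by case: (odd (inv [set: 'I_n] [set k])); rewrite /= ?expr1 ?expr0 ?opprK.
Qed.

Implicit Types x y z : Cl.
Lemma scC (c d : C) : c *: d = c * d.
Proof. by []. Qed.
Lemma ffD x y A : (x + y) A = x A + y A.
Proof. by rewrite /GRing.add /= /ffun_add ffunE. Qed.
Lemma ffN x A : (- x) A = - x A.
Proof. by rewrite /GRing.opp /= /ffun_opp ffunE. Qed.
Lemma ffB x y A : (x - y) A = x A - y A.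
Proof. by rewrite ffD ffN. Qed.
Lemma ffZ (c : C) x A : (c *: x) A = c * x A.
Proof. by rewrite /GRing.scale /= /ffun_scale ffunE. Qed.
Lemma ff0 A : (0 : Cl) A = 0.
Proof. by rewrite /GRing.zero /= /ffun_zero ffunE. Qed.

Lemma clmulDl x y z : clmul (x + y) z = clmul x z + clmul y z.
Proof. apply/ffunP => D; rewrite !ffunE -big_split; apply: eq_bigr => A _; by rewrite ffD mulrDr mulrDl. Qed.
Lemma clmulDr x y z : clmul x (y + z) = clmul x y + clmul x z.
Proof. apply/ffunP => D; rewrite !ffunE -big_split; apply: eq_bigr => A _; by rewrite ffD mulrDr. Qed.
Lemma clmulZl c x y : clmul (c *: x) y = c *: clmul x y.
Proof. apply/ffunP => D; rewrite !ffunE ?ffZ ?ffunE scC mulr_sumr; apply: eq_bigr => A _; rewrite ?ffZ; ring. Qed.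
Lemma clmulZr c x y : clmul x (c *: y) = c *: clmul x y.
Proof. apply/ffunP => D; rewrite !ffunE ?ffZ ?ffunE scC mulr_sumr; apply: eq_bigr => A _; rewrite ?ffD ?ffZ ?ff0; ring. Qed.
Lemma clmul0l y : clmul 0 y = 0.
Proof. apply/ffunP => D; rewrite !ffunE ?ff0 big1 // => A _; rewrite ff0; ring. Qed.
Lemma clmul0r y : clmul y 0 = 0.
Proof. apply/ffunP => D; rewrite !ffunE ?ff0 big1 // => A _; rewrite ff0; ring. Qed.
Lemma clmulNl x y : clmul (- x) y = - clmul x y.
Proof. by rewrite -scaleN1r clmulZl scaleN1r. Qed.
Lemma clmulNr x y : clmul x (- y) = - clmul x y.
Proof. by rewrite -scaleN1r clmulZr scaleN1r. Qed.
Lemma clmulBl x y z : clmul (x - y) z = clmul x z - clmul y z.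
Proof. by rewrite clmulDl clmulNl. Qed.
Lemma clmulBr x y z : clmul x (y - z) = clmul x y - clmul x z.
Proof. by rewrite clmulDr clmulNr. Qed.
Lemma clmul_suml I r (P : pred I) (F : I -> Cl) y :
  clmul (\sum_(i <- r | P i) F i) y = \sum_(i <- r | P i) clmul (F i) y.
Proof. exact: (big_morph (fun a => clmul a y) (fun a b => clmulDl a b y) (clmul0l y)). Qed.
Lemma clmul_sumr I r (P : pred I) (F : I -> Cl) y :
  clmul y (\sum_(i <- r | P i) F i) = \sum_(i <- r | P i) clmul y (F i).
Proof. exact: (big_morph (fun a => clmul y a) (fun a b => clmulDr y a b) (clmul0r y)). Qed.

Lemma blade_decomp x : x = \sum_A blade A (x A).
Proof.
apply/ffunP => D; rewrite sum_ffunE (bigD1 D) //= big1 ?addr0; first by rewrite ffunE eqxx.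
by move=> A /negPf hA; rewrite ffunE eq_sym hA.
Qed.
Lemma blade0 A : blade A (0 : C) = 0.
Proof. by apply/ffunP => D; rewrite !ffunE ?ff0; case: (D == A). Qed.
Lemma bladeZ A c d : c *: blade A d = blade A (c * d).
Proof. by apply/ffunP => D; rewrite ?ffZ !ffunE ?scC; case: (D == A); rewrite ?mulr0. Qed.
Lemma bladeN A d : blade A (- d) = - blade A d.
Proof. by apply/ffunP => D; rewrite ?ffN !ffunE; case: (D == A); rewrite ?oppr0. Qed.
Lemma symd_eq A D : (symd A D == D) = (A == finset.set0).
Proof.
apply/eqP/eqP => [h|->]; last by rewrite sym0d.
have : symd (symd A D) D = A by rewrite -symdA symdd symd0.
by rewrite h symdd => <-.
Qed.
Lemma symd_eq' A B D : (symd A D == B) = (D == symd A B).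
Proof.
apply/eqP/eqP => [<-|->]; by rewrite symdK.
Qed.
Lemma clmul_blade A B a b :
  clmul (blade A a) (blade B b) = blade (symd A B) (clsign A B * a * b).
Proof.
apply/ffunP => D; rewrite !ffunE (bigD1 A) //= big1 ?addr0; last first.
  by move=> E /negPf hE; rewrite ffunE hE; ring.
rewrite !ffunE eqxx symd_eq'.
by case: eqP => [->|_]; rewrite ?symdK; ring.
Qed.
Lemma clsign0l B : clsign finset.set0 B = 1.
Proof.
rewrite clsign_inv inv_sum big1 ?finset.set0I ?cards0 ?expr0 //.
by move=> i _; apply: big1 => j _; rewrite inE.
Qed.
Lemma clsign0r A : clsign A finset.set0 = 1.
Proof.
rewrite clsign_inv inv_sum big1 ?finset.setI0 ?cards0 ?expr0 //.
by move=> i _; apply: big1 => j _; rewrite inE andbF.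
Qed.
Lemma clmul_scalarl c x : clmul (cl_scalar c) x = c *: x.
Proof.
apply/ffunP => D; rewrite !ffunE (bigD1 finset.set0) //= big1 ?addr0; last first.
  by move=> E /negPf hE; rewrite ffunE hE; ring.
by rewrite ?ffZ ffunE eqxx sym0d clsign0l mul1r.
Qed.
Lemma clmul_scalarr c x : clmul x (cl_scalar c) = c *: x.
Proof.
apply/ffunP => D; rewrite !ffunE (bigD1 D) //= big1 ?addr0; last first.
  by move=> E /negPf hE; rewrite ffunE symd_eq' symd0 eq_sym hE; ring.
by rewrite ?ffZ ffunE symdd eqxx clsign0r scC; ring.
Qed.
Lemma blade_scalar c : blade finset.set0 c = cl_scalar c.
Proof. by []. Qed.
End Alg.


Section Ana.
Variables (R : realType) (n : nat).
Local Notation V := ('rV[R]_n).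
Local Notation C := (complex R).
Local Notation Cl := {ffun {set 'I_n} -> C}.
Local Notation Re := (@complex.Re R).
Local Notation Im := (@complex.Im R).
Variables (O : set V) (hO : open O).
Implicit Types (u w : V -> R) (j : 'I_n).

Lemma nearO x : O x -> \forall y \near x, O y.
Proof. by move=> Ox; apply: open_nbhs_nbhs. Qed.

Lemma near_eqO u w x : O x -> (forall y, O y -> u y = w y) -> {near x, u =1 w}.
Proof. by move=> Ox h; apply: filterS (nearO Ox) => y; exact: h. Qed.

Lemma cont_loc u w x : O x -> (forall y, O y -> u y = w y) ->
  {for x, continuous u} -> {for x, continuous w}.
Proof.
move=> Ox h hu; have e := near_eqO Ox h.
rewrite /prop_for /continuous_at -(h x Ox).
apply: cvg_trans hu; exact: near_eq_cvg e.
Qed.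

Lemma pdR_loc j u w y : O y -> (forall y, O y -> u y = w y) -> pdR j u y = pdR j w y.
Proof. by move=> Oy h; rewrite /pdR; apply: near_eq_derive; exact: near_eqO. Qed.

Lemma der_loc j u w x : O x -> (forall y, O y -> u y = w y) ->
  derivable u x (ej j) -> derivable w x (ej j).
Proof. move=> Ox h; apply: near_eq_derivable; exact: near_eqO. Qed.

Lemma CkR_loc k : forall u w, (forall y, O y -> u y = w y) -> CkR k O u -> CkR k O w.
Proof.
elim: k => [|k IH] u w h /=.
  by move=> hu x Ox; exact: cont_loc (hu x Ox).
move=> [hc hd]; split; first by move=> x Ox; exact: cont_loc (hc x Ox).
move=> j; have [hdj hk] := hd j; split; first by move=> x Ox; exact: der_loc (hdj x Ox).
by apply: IH hk => y Oy; exact: pdR_loc.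
Qed.

Lemma CkR_mono k : forall u, CkR k.+1 O u -> CkR k O u.
Proof.
elim: k => [|k IH] u /=; first by case.
move=> [hc hd]; split => // j; have [h1 h2] := hd j; split => //; exact: IH.
Qed.

Lemma CkR_add k : forall u w, CkR k O u -> CkR k O w -> CkR k O (fun y => u y + w y).
Proof.
elim: k => [|k IH] u w /=.
  by move=> hu hw x Ox; exact: cvgD (hu x Ox) (hw x Ox).
move=> [hcu hdu] [hcw hdw]; split; first by move=> x Ox; exact: cvgD (hcu x Ox) (hcw x Ox).
move=> j; have [du ku] := hdu j; have [dw kw] := hdw j; split.
  by move=> x Ox; exact: derivableD (du x Ox) (dw x Ox).
apply: (@CkR_loc _ (fun y => pdR j u y + pdR j w y)); last exact: IH.
by move=> y Oy; apply/esym; exact: deriveD (du y Oy) (dw y Oy).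
Qed.

Lemma CkR_mul k : forall u w, CkR k O u -> CkR k O w -> CkR k O (fun y => u y * w y).
Proof.
elim: k => [|k IH] u w /=.
  by move=> hu hw x Ox; exact: cvgM (hu x Ox) (hw x Ox).
move=> hu hw.
have hu0 := CkR_mono hu; have hw0 := CkR_mono hw.
move: hu hw => [hcu hdu] [hcw hdw]; split; first by move=> x Ox; exact: cvgM (hcu x Ox) (hcw x Ox).
move=> j; have [du ku] := hdu j; have [dw kw] := hdw j; split.
  by move=> x Ox; exact: derivableM (du x Ox) (dw x Ox).
apply: (@CkR_loc _ (fun y => u y * pdR j w y + w y * pdR j u y)); last first.
  by apply: CkR_add; apply: IH.
by move=> y Oy; apply/esym; exact: deriveM (du y Oy) (dw y Oy).
Qed.

Lemma CkR_cst k (c : R) : CkR k O (fun _ => c).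
Proof.
elim: k c => [|k IH] c /=; first by move=> x _; exact: cst_continuous.
split; first by move=> x _; exact: cst_continuous.
move=> j; split; first by move=> x _; exact: (derivable_cst c x (ej j)).
have h0 : forall y, O y -> (fun _ : V => 0 : R) y = pdR j (fun _ => c) y.
  by move=> y _; apply/esym; exact: (derive_cst c y (ej j)).
exact: (CkR_loc h0 (IH 0)).
Qed.

Lemma smoothR_ext u w : (forall y, O y -> u y = w y) -> smoothR O u -> smoothR O w.
Proof. by move=> h hu k; exact: CkR_loc h (hu k). Qed.
Lemma smoothR_add u w : smoothR O u -> smoothR O w -> smoothR O (fun y => u y + w y).
Proof. by move=> hu hw k; exact: CkR_add. Qed.
Lemma smoothR_mul u w : smoothR O u -> smoothR O w -> smoothR O (fun y => u y * w y).
Proof. by move=> hu hw k; exact: CkR_mul. Qed.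
Lemma smoothR_cst (c : R) : smoothR O (fun _ => c).
Proof. by move=> k; exact: CkR_cst. Qed.
Lemma smoothR_opp u : smoothR O u -> smoothR O (fun y => - u y).
Proof.
move=> hu; apply: (@smoothR_ext (fun y => -1 * u y)); first by move=> y _; rewrite mulN1r.
by apply: smoothR_mul => //; exact: smoothR_cst.
Qed.
Lemma smoothR_sub u w : smoothR O u -> smoothR O w -> smoothR O (fun y => u y - w y).
Proof. by move=> hu hw; apply: smoothR_add => //; exact: smoothR_opp. Qed.
Lemma smoothR_pd j u : smoothR O u -> smoothR O (pdR j u).
Proof. by move=> h k; have /= [_ hd] := h k.+1; exact: (hd j).2. Qed.
Lemma smoothR_der j u x : smoothR O u -> O x -> derivable u x (ej j).
Proof. by move=> h Ox; have /= [_ hd] := h 1%N; exact: (hd j).1 x Ox. Qed.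

Ltac sm := repeat first [ assumption | apply: smoothR_add | apply: smoothR_mul
  | apply: smoothR_sub | apply: smoothR_opp | apply: smoothR_cst ].

Lemma pdR_add j u w x : smoothR O u -> smoothR O w -> O x ->
  pdR j (fun y => u y + w y) x = pdR j u x + pdR j w x.
Proof. move=> hu hw Ox; exact: deriveD (smoothR_der hu Ox) (smoothR_der hw Ox). Qed.
Lemma pdR_mul j u w x : smoothR O u -> smoothR O w -> O x ->
  pdR j (fun y => u y * w y) x = u x * pdR j w x + w x * pdR j u x.
Proof. move=> hu hw Ox; exact: deriveM (smoothR_der hu Ox) (smoothR_der hw Ox). Qed.
Lemma pdR_opp j u x : smoothR O u -> O x -> pdR j (fun y => - u y) x = - pdR j u x.
Proof. move=> hu Ox; exact: deriveN (smoothR_der hu Ox). Qed.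
Lemma pdR_sub j u w x : smoothR O u -> smoothR O w -> O x ->
  pdR j (fun y => u y - w y) x = pdR j u x - pdR j w x.
Proof. by move=> hu hw Ox; rewrite pdR_add ?pdR_opp //; sm. Qed.
Lemma pdR_cst j (c : R) x : pdR j (fun _ => c) x = 0.
Proof. exact: (derive_cst c x (ej j)). Qed.

Implicit Types (p q : V -> C).
Lemma smoothC_ext p q : (forall y, O y -> p y = q y) -> smoothC O p -> smoothC O q.
Proof.
move=> h [h1 h2]; split.
  by apply: smoothR_ext h1 => y Oy; rewrite h.
by apply: smoothR_ext h2 => y Oy; rewrite h.
Qed.
Lemma smoothC_add p q : smoothC O p -> smoothC O q -> smoothC O (fun y => p y + q y).
Proof.
move=> [p1 p2] [q1 q2]; split.
  apply: (@smoothR_ext (fun y => Re (p y) + Re (q y))); last by sm.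
  by move=> y _; case: (p y); case: (q y).
apply: (@smoothR_ext (fun y => Im (p y) + Im (q y))); last by sm.
by move=> y _; case: (p y); case: (q y).
Qed.
Lemma smoothC_mul p q : smoothC O p -> smoothC O q -> smoothC O (fun y => p y * q y).
Proof.
move=> [p1 p2] [q1 q2]; split.
  apply: (@smoothR_ext (fun y => Re (p y) * Re (q y) - Im (p y) * Im (q y))); last by sm.
  by move=> y _; case: (p y); case: (q y).
apply: (@smoothR_ext (fun y => Re (p y) * Im (q y) + Im (p y) * Re (q y))); last by sm.
by move=> y _; case: (p y) => a b; case: (q y) => c d /=.
Qed.
Lemma smoothC_cst (c : C) : smoothC O (fun _ => c).
Proof. by split; apply: smoothR_cst. Qed.
Lemma smoothC_opp p : smoothC O p -> smoothC O (fun y => - p y).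
Proof.
move=> hp; apply: (@smoothC_ext (fun y => (-1) * p y)); first by move=> y _; rewrite mulN1r.
by apply: smoothC_mul => //; exact: smoothC_cst.
Qed.
Lemma smoothC_sub p q : smoothC O p -> smoothC O q -> smoothC O (fun y => p y - q y).
Proof. by move=> hp hq; apply: smoothC_add => //; exact: smoothC_opp. Qed.
Lemma smoothC_sum I (r : seq I) (P : pred I) (F : I -> V -> C) :
  (forall i, P i -> smoothC O (F i)) -> smoothC O (fun y => \sum_(i <- r | P i) F i y).
Proof.
move=> hF; elim: r => [|a r IH].
  by apply: (@smoothC_ext (fun _ => 0)); [move=> y _; rewrite big_nil | exact: smoothC_cst].
case hPa: (P a).
  apply: (@smoothC_ext (fun y => F a y + \sum_(i <- r | P i) F i y)).
    by move=> y _; rewrite big_cons hPa.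
  by apply: smoothC_add => //; exact: hF.
by apply: (@smoothC_ext (fun y => \sum_(i <- r | P i) F i y)) => // y _; rewrite big_cons hPa.
Qed.
Lemma smoothC_pd j p : smoothC O p -> smoothC O (pdC j p).
Proof. by move=> [h1 h2]; split; apply: smoothR_pd. Qed.

Lemma pdC_ext j p q x : O x -> (forall y, O y -> p y = q y) -> pdC j p x = pdC j q x.
Proof.
move=> Ox h; rewrite /pdC (@pdR_loc j (fun y => Re (p y)) (fun y => Re (q y))) ?(@pdR_loc j (fun y => Im (p y)) (fun y => Im (q y))) //.
  by move=> y Oy; rewrite h.
by move=> y Oy; rewrite h.
Qed.
Lemma pdC_add j p q x : smoothC O p -> smoothC O q -> O x ->
  pdC j (fun y => p y + q y) x = pdC j p x + pdC j q x.
Proof.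
move=> [p1 p2] [q1 q2] Ox.
rewrite /pdC (@pdR_loc j (fun y => Re (p y + q y)) (fun y => Re (p y) + Re (q y))) //; last first.
  by move=> y _; case: (p y); case: (q y).
rewrite (@pdR_loc j (fun y => Im (p y + q y)) (fun y => Im (p y) + Im (q y))) //; last first.
  by move=> y _; case: (p y); case: (q y).
by rewrite !pdR_add.
Qed.
Lemma pdC_mul j p q x : smoothC O p -> smoothC O q -> O x ->
  pdC j (fun y => p y * q y) x = pdC j p x * q x + p x * pdC j q x.
Proof.
move=> [p1 p2] [q1 q2] Ox.
rewrite /pdC (@pdR_loc j (fun y => Re (p y * q y)) (fun y => Re (p y) * Re (q y) - Im (p y) * Im (q y))) //; last first.
  by move=> y _; case: (p y); case: (q y).
rewrite (@pdR_loc j (fun y => Im (p y * q y)) (fun y => Re (p y) * Im (q y) + Im (p y) * Re (q y))) //; last first.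
  by move=> y _; case: (p y) => a b; case: (q y) => c d /=.
rewrite pdR_sub ?pdR_add ?pdR_mul //; try by sm.
move: (pdR j (fun y => Re (p y)) x) (pdR j (fun y => Im (p y)) x) => a b.
move: (pdR j (fun y => Re (q y)) x) (pdR j (fun y => Im (q y)) x) => c d.
case: (p x) => e f; case: (q x) => g h /=.
apply/eqP; rewrite eq_complex /=; apply/andP; split; apply/eqP; ring.
Qed.
Lemma pdC_cst j (c : C) x : pdC j (fun _ => c) x = 0.
Proof. by rewrite /pdC !pdR_cst. Qed.
Local Notation blade := (@blade R n).
Local Notation clsign := (@clsign R n).
Local Notation cl_scalar := (@cl_scalar R n).
Implicit Types (F G : V -> Cl).

Lemma smoothCl_ext F G : (forall y, O y -> F y = G y) -> smoothCl O F -> smoothCl O G.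
Proof. move=> h hF A; apply: smoothC_ext (hF A) => y Oy; by rewrite h. Qed.
Lemma smoothCl_add F G : smoothCl O F -> smoothCl O G -> smoothCl O (fun y => F y + G y).
Proof.
move=> hF hG A; apply: (@smoothC_ext (fun y => F y A + G y A)).
  by move=> y _; rewrite ffD.
exact: smoothC_add.
Qed.
Lemma smoothCl_scale p F : smoothC O p -> smoothCl O F -> smoothCl O (fun y => p y *: F y).
Proof.
move=> hp hF A; apply: (@smoothC_ext (fun y => p y * F y A)).
  by move=> y _; rewrite ffZ.
exact: smoothC_mul.
Qed.
Lemma smoothCl_cst (K : Cl) : smoothCl O (fun _ => K).
Proof. move=> A; exact: smoothC_cst. Qed.
Lemma smoothCl_opp F : smoothCl O F -> smoothCl O (fun y => - F y).
Proof.
move=> hF; apply: (@smoothCl_ext (fun y => (-1) *: F y)); first by move=> y _; rewrite scaleN1r.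
apply: smoothCl_scale => //; exact: smoothC_cst.
Qed.
Lemma smoothCl_sub F G : smoothCl O F -> smoothCl O G -> smoothCl O (fun y => F y - G y).
Proof. by move=> hF hG; apply: smoothCl_add => //; exact: smoothCl_opp. Qed.
Lemma smoothCl_sum I (r : seq I) (P : pred I) (F : I -> V -> Cl) :
  (forall i, P i -> smoothCl O (F i)) -> smoothCl O (fun y => \sum_(i <- r | P i) F i y).
Proof.
move=> hF A; apply: (@smoothC_ext (fun y => \sum_(i <- r | P i) F i y A)).
  by move=> y _; rewrite sum_ffunE.
by apply: smoothC_sum => i Pi; exact: hF.
Qed.
Lemma smoothCl_clmul F G : smoothCl O F -> smoothCl O G -> smoothCl O (fun y => clmul (F y) (G y)).
Proof.
move=> hF hG A.
apply: (@smoothC_ext (fun y => \sum_B clsign B (symd B A) * F y B * G y (symd B A))).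
  by move=> y _; rewrite ffunE.
apply: smoothC_sum => B _; apply: smoothC_mul => //; apply: smoothC_mul => //; exact: smoothC_cst.
Qed.
Lemma smoothCl_scalar p : smoothC O p -> smoothCl O (fun y => cl_scalar (p y)).
Proof.
move=> hp A; case hA: (A == finset.set0).
  by apply: (smoothC_ext (p := p)) => // y _; rewrite ffunE hA.
by apply: (smoothC_ext (p := fun _ => 0)); [move=> y _; rewrite ffunE hA | exact: smoothC_cst].
Qed.
Lemma smoothCl_pd j F : smoothCl O F -> smoothCl O (pdCl j F).
Proof.
move=> hF A; apply: (@smoothC_ext (pdC j (fun z => F z A))).
  by move=> y _; rewrite ffunE.
exact: smoothC_pd.
Qed.
Lemma smoothCl_dirac F : smoothCl O F -> smoothCl O (dirac_op F).
Proof.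
move=> hF; apply: (@smoothCl_ext (fun y => \sum_(j < n) clmul (blade [set j] 1) (pdCl j F y))) => //.
apply: smoothCl_sum => j _; apply: smoothCl_clmul; [exact: smoothCl_cst | exact: smoothCl_pd].
Qed.

Lemma pdC_sum I (r : seq I) (P : pred I) (F : I -> V -> C) j x :
  (forall i, P i -> smoothC O (F i)) -> O x ->
  pdC j (fun y => \sum_(i <- r | P i) F i y) x = \sum_(i <- r | P i) pdC j (F i) x.
Proof.
move=> hF Ox; elim: r => [|a r IH].
  rewrite big_nil; transitivity (pdC j (fun _ => (0:C)) x); last exact: pdC_cst.
  by apply: pdC_ext => // y _; rewrite big_nil.
rewrite big_cons; case hPa: (P a).
  rewrite -IH -pdC_add //; last by apply: smoothC_sum.
    by apply: pdC_ext => // y _; rewrite big_cons hPa.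
  exact: hF.
by rewrite -IH; apply: pdC_ext => // y _; rewrite big_cons hPa.
Qed.

Lemma pdCl_ext j F G x : O x -> (forall y, O y -> F y = G y) -> pdCl j F x = pdCl j G x.
Proof. move=> Ox h; apply/ffunP => A; rewrite !ffunE; apply: pdC_ext => // y Oy; by rewrite h. Qed.
Lemma pdCl_add j F G x : smoothCl O F -> smoothCl O G -> O x ->
  pdCl j (fun y => F y + G y) x = pdCl j F x + pdCl j G x.
Proof.
move=> hF hG Ox; apply/ffunP => A; rewrite ffD !ffunE.
rewrite -pdC_add //; apply: pdC_ext => // y _; by rewrite ffD.
Qed.
Lemma pdCl_scale j p F x : smoothC O p -> smoothCl O F -> O x ->
  pdCl j (fun y => p y *: F y) x = pdC j p x *: F x + p x *: pdCl j F x.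
Proof.
move=> hp hF Ox; apply/ffunP => A; rewrite ffD !ffZ !ffunE.
rewrite -pdC_mul //; apply: pdC_ext => // y _; by rewrite ffZ.
Qed.
Lemma pdCl_cst j (K : Cl) x : pdCl j (fun _ => K) x = 0.
Proof. by apply/ffunP => A; rewrite ffunE ff0 pdC_cst. Qed.
Lemma pdCl_opp j F x : smoothCl O F -> O x -> pdCl j (fun y => - F y) x = - pdCl j F x.
Proof.
move=> hF Ox; rewrite (@pdCl_ext j _ (fun y => (-1) *: F y)) //; last by move=> y _; rewrite scaleN1r.
by rewrite pdCl_scale ?pdC_cst ?scale0r ?add0r ?scaleN1r //; exact: smoothC_cst.
Qed.
Lemma pdCl_sub j F G x : smoothCl O F -> smoothCl O G -> O x ->
  pdCl j (fun y => F y - G y) x = pdCl j F x - pdCl j G x.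
Proof. by move=> hF hG Ox; rewrite pdCl_add ?pdCl_opp //; exact: smoothCl_opp. Qed.
Lemma pdCl_clmul j F G x : smoothCl O F -> smoothCl O G -> O x ->
  pdCl j (fun y => clmul (F y) (G y)) x = clmul (pdCl j F x) (G x) + clmul (F x) (pdCl j G x).
Proof.
move=> hF hG Ox; apply/ffunP => A; rewrite ffD !ffunE.
rewrite (@pdC_ext j _ (fun y => \sum_B clsign B (symd B A) * F y B * G y (symd B A))) //; last first.
  by move=> y _; rewrite ffunE.
rewrite pdC_sum //; last first.
  by move=> B _; apply: smoothC_mul => //; apply: smoothC_mul => //; exact: smoothC_cst.
rewrite -big_split; apply: eq_bigr => B _ /=.
rewrite pdC_mul //; last by apply: smoothC_mul => //; exact: smoothC_cst.
rewrite pdC_mul ?pdC_cst //; last exact: smoothC_cst.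
rewrite !ffunE; ring.
Qed.
Lemma pdCl_scalar j p x : smoothC O p -> O x ->
  pdCl j (fun y => cl_scalar (p y)) x = cl_scalar (pdC j p x).
Proof.
move=> hp Ox; apply/ffunP => A; rewrite !ffunE; case hA: (A == finset.set0).
  by apply: pdC_ext => // y _; rewrite ffunE hA.
by rewrite -(@pdC_cst j 0 x); apply: pdC_ext => // y _; rewrite ffunE hA.
Qed.

Lemma dirac_ext F G x : O x -> (forall y, O y -> F y = G y) -> dirac_op F x = dirac_op G x.
Proof. move=> Ox h; apply: eq_bigr => j _; by rewrite (pdCl_ext j Ox h). Qed.
Lemma dirac_add F G x : smoothCl O F -> smoothCl O G -> O x ->
  dirac_op (fun y => F y + G y) x = dirac_op F x + dirac_op G x.
Proof. move=> hF hG Ox; rewrite /dirac_op -big_split; apply: eq_bigr => j _; by rewrite pdCl_add // clmulDr. Qed.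
Lemma dirac_sub F G x : smoothCl O F -> smoothCl O G -> O x ->
  dirac_op (fun y => F y - G y) x = dirac_op F x - dirac_op G x.
Proof.
move=> hF hG Ox; rewrite /dirac_op -sumrB; apply: eq_bigr => j _; by rewrite pdCl_sub // clmulBr.
Qed.
Lemma dirac_scale_cst (c : C) F x : smoothCl O F -> O x ->
  dirac_op (fun y => c *: F y) x = c *: dirac_op F x.
Proof.
move=> hF Ox; rewrite /dirac_op scaler_sumr; apply: eq_bigr => j _.
rewrite (@pdCl_scale j (fun _ => c)) ?pdC_cst ?scale0r ?add0r ?clmulZr //; exact: smoothC_cst.
Qed.
Lemma dirac_clmul_cst F (K : Cl) x : smoothCl O F -> O x ->
  dirac_op (fun y => clmul (F y) K) x = clmul (dirac_op F x) K.
Proof.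
move=> hF Ox; rewrite /dirac_op clmul_suml; apply: eq_bigr => j _.
rewrite (@pdCl_clmul j F (fun _ => K)) //; last exact: smoothCl_cst.
by rewrite pdCl_cst clmul0r addr0 clmulA.
Qed.
Lemma dirac_scal p F x : smoothC O p -> smoothCl O F -> O x ->
  dirac_op (fun y => p y *: F y) x =
  clmul (dirac_op (fun y => cl_scalar (p y)) x) (F x) + p x *: dirac_op F x.
Proof.
move=> hp hF Ox; rewrite /dirac_op clmul_suml scaler_sumr -big_split; apply: eq_bigr => j _.
rewrite pdCl_scale // pdCl_scalar // clmul_scalarr clmulDr !clmulZr clmulZl.
by [].
Qed.
End Ana.


Section Spec.
Variables (R : realType) (n : nat).
Local Notation C := (complex R).
Local Notation Cl := {ffun {set 'I_n} -> C}.
Local Notation blade := (@blade R n).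
Local Notation clsign := (@clsign R n).
Local Notation cl_scalar := (@cl_scalar R n).
Local Notation TT := (@TT n).

Lemma iCiC : iC * iC = -1 :> C.
Proof. rewrite /iC; apply/eqP; rewrite eq_complex /=; apply/andP; split; apply/eqP; ring. Qed.

Lemma lam_aE (lam : C) : lam_i_eN lam = blade TT (lam * iC) :> Cl.
Proof. by rewrite /lam_i_eN /eN clmul_scalarl bladeZ mulr1. Qed.

Lemma bb_a (lam : C) : lam != 0 -> ~~ odd n -> odd n./2 ->
  clmul (blade TT (iC / lam)) (blade TT (lam * iC)) = cl_scalar 1.
Proof.
move=> hl hev hodd; rewrite clmul_blade symdd sign_TT //.
rewrite /cl_scalar; congr (blade _ _).
have -> : -1 * (iC / lam) * (lam * iC) = - (iC * iC) * (lam / lam) by ring.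
by rewrite iCiC divff // opprK mulr1.
Qed.
Lemma a_bb (lam : C) : lam != 0 -> ~~ odd n -> odd n./2 ->
  clmul (blade TT (lam * iC)) (blade TT (iC / lam)) = cl_scalar 1.
Proof.
move=> hl hev hodd; rewrite clmul_blade symdd sign_TT //.
rewrite /cl_scalar; congr (blade _ _).
have -> : -1 * (lam * iC) * (iC / lam) = - (iC * iC) * (lam / lam) by ring.
by rewrite iCiC divff // opprK mulr1.
Qed.

Lemma anticomm (c : C) (F : Cl) : ~~ odd n -> is_vector F ->
  clmul (blade TT c) F = - clmul F (blade TT c).
Proof.
move=> hev hv.
rewrite [in LHS](blade_decomp F) [in RHS](blade_decomp F) clmul_sumr clmul_suml -sumrN.
apply: eq_bigr => A _.
case hA: (#|A| == 1%N).
  move/cards1P: hA => [k ->].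
  rewrite !clmul_blade (symdC [set k]) -bladeN; congr (blade _ _).
  rewrite (sign_kT _ k hev); ring.
by rewrite hv ?hA // blade0 clmul0r clmul0l oppr0.
Qed.
End Spec.

Lemma two_neq0 (R : realType) : (2 : complex R) != 0.
Proof. by rewrite pnatr_eq0. Qed.

Lemma uniq_dec (R : realType) (n : nat) (Omega : set (V R n)) (hO : open Omega)
  (f : V R n -> Cl R n) (lam : complex R) (phi : V R n -> complex R) (g1 h1 g2 h2 : V R n -> Cl R n) :
  lam != 0 -> ~~ odd n -> odd n./2 ->
  decomposition Omega f lam phi g1 h1 -> decomposition Omega f lam phi g2 h2 ->
  forall x, Omega x -> g1 x = g2 x /\ h1 x = h2 x.
Proof.
move=> hl hev hodd [s1 t1 e1 f1 p1] [s2 t2 e2 f2 p2] x Ox.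
pose a : Cl R n := lam_i_eN lam.
pose bb : Cl R n := blade (@TT n) (iC / lam).
have hh : forall y, Omega y -> h1 y - h2 y = (-1) *: (g1 y - g2 y).
  move=> y Oy; have := p1 y Oy; rewrite (p2 y Oy) => E.
  apply/ffunP => A; have := congr1 (fun z : Cl R n => z A) E; rewrite /= !(ffB, ffD, ffN, ffZ) => E'.
  apply/eqP; rewrite -subr_eq0; apply/eqP.
  transitivity ((g1 y A + h1 y A) - (g2 y A + h2 y A)); first by ring.
  by rewrite E' subrr.
have sg : smoothCl Omega (fun y => g1 y - g2 y) := smoothCl_sub hO s1 s2.
have sh : smoothCl Omega (fun y => h1 y - h2 y) := smoothCl_sub hO t1 t2.
have Dg : dirac_op (fun y => g1 y - g2 y) x = clmul (g1 x - g2 x) (f x + a).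
  rewrite (dirac_sub hO s1 s2 Ox) clmulBl.
  have := e1 x Ox; have := e2 x Ox; rewrite /rmul => /eqP; rewrite subr_eq0 => /eqP ->.
  by move/eqP; rewrite subr_eq0 => /eqP ->.
have Dh : dirac_op (fun y => h1 y - h2 y) x = clmul (h1 x - h2 x) (f x - a).
  rewrite (dirac_sub hO t1 t2 Ox) clmulBl.
  have := f1 x Ox; have := f2 x Ox; rewrite /rmul => /eqP; rewrite subr_eq0 => /eqP ->.
  by move/eqP; rewrite subr_eq0 => /eqP ->.
have Dh' : dirac_op (fun y => h1 y - h2 y) x = (-1) *: clmul (g1 x - g2 x) (f x + a).
  rewrite (dirac_ext hO Ox hh) (dirac_scale_cst hO (-1) sg Ox) Dg //.
rewrite Dh hh // in Dh'.
set k := g1 x - g2 x in Dh'.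
have ka : clmul k a = 0.
  move: Dh'; rewrite clmulZl !clmulDr !clmulNr => E.
  apply/ffunP => A; have := congr1 (fun z : Cl R n => z A) E; rewrite /= !(ffB, ffD, ffN, ffZ) ff0.
  move: (clmul k (f x) A) (clmul k a A) => p q H.
  have : (2 : complex R) * q = 0.
    transitivity (-1 * (p - q) - -1 * (p + q)); first by ring.
    by rewrite H subrr.
  by move/eqP; rewrite mulf_eq0 (negbTE (two_neq0 R)) /= => /eqP.
have k0 : k = 0.
  rewrite -[k]scale1r -clmul_scalarr -(a_bb hl hev hodd) -lam_aE -/a -clmulA ka clmul0l //.
have g12 : g1 x = g2 x by apply/eqP; rewrite -subr_eq0 -/k k0.
split => //.
apply/eqP; rewrite -subr_eq0 hh // g12 subrr scaler0 //.
Qed.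

Unset Implicit Arguments.
Theorem corollary7p1 (R : realType) (n : nat)
  (hn_even : ~~ odd n) (hn_half : odd n./2)
  (Omega : set (V R n)) (hOmega : open Omega)
  (v : V R n -> complex R) (hv : smoothC Omega v)
  (lam : complex R) (hlam : lam != 0)
  (f : V R n -> Cl R n)
  (hf_vec : forall x, Omega x -> is_vector (f x))
  (hf_smooth : smoothCl Omega f)
  (hf_riccati : forall x, Omega x -> dirac_op f x + clmul (f x) (f x) = cl_scalar (v x))
  (phi : V R n -> complex R) (hphi : smoothC Omega phi)
  (hphi_schr : forall x, Omega x ->
     - laplacian (fun y => cl_scalar (phi y)) x - clmul (cl_scalar (v x)) (cl_scalar (phi x))
     = cl_scalar (lam ^+ 2 * phi x)) :
  exists g h, decomposition Omega f lam phi g h /\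
    forall g' h', decomposition Omega f lam phi g' h' ->
      forall x, Omega x -> g' x = g x /\ h' x = h x.
Proof.
pose a : Cl R n := lam_i_eN lam.
pose bb : Cl R n := blade (@TT n) (iC / lam).
have aE : a = blade (@TT n) (lam * iC) := lam_aE _ lam.
pose Phi : V R n -> Cl R n := fun y => cl_scalar (phi y).
pose X : V R n -> Cl R n := fun y => dirac_op Phi y - phi y *: f y.
pose w : V R n -> Cl R n := fun y => clmul (X y) bb.
pose g : V R n -> Cl R n := fun y => (2 : complex R)^-1 *: (Phi y + w y).
pose h : V R n -> Cl R n := fun y => (2 : complex R)^-1 *: (Phi y - w y).
have sPhi : smoothCl Omega Phi := smoothCl_scalar hOmega hphi.
have sDPhi : smoothCl Omega (dirac_op Phi) := smoothCl_dirac hOmega sPhi.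
have sPf : smoothCl Omega (fun y => phi y *: f y) := smoothCl_scale hOmega hphi hf_smooth.
have sX : smoothCl Omega X := smoothCl_sub hOmega sDPhi sPf.
have sw : smoothCl Omega w := smoothCl_clmul hOmega sX (smoothCl_cst hOmega bb).
have sPw : smoothCl Omega (fun y => Phi y + w y) := smoothCl_add hOmega sPhi sw.
have sPw' : smoothCl Omega (fun y => Phi y - w y) := smoothCl_sub hOmega sPhi sw.
have sg : smoothCl Omega g := smoothCl_scale hOmega (smoothC_cst hOmega _) sPw.
have sh : smoothCl Omega h := smoothCl_scale hOmega (smoothC_cst hOmega _) sPw'.
have wa : forall x, clmul (w x) a = X x.
  by move=> x; rewrite /w clmulA aE bb_a // clmul_scalarr scale1r.
have KEY : forall x, Omega x -> dirac_op w x = clmul (w x) (f x) + phi x *: a.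
  move=> x Ox.
  have e1 : dirac_op w x = clmul (dirac_op X x) bb := dirac_clmul_cst hOmega bb sX Ox.
  have e2 : dirac_op X x = dirac_op (dirac_op Phi) x - dirac_op (fun y => phi y *: f y) x :=
    dirac_sub hOmega sDPhi sPf Ox.
  have e3 : dirac_op (fun y => phi y *: f y) x = clmul (dirac_op Phi x) (f x) + phi x *: dirac_op f x :=
    dirac_scal hOmega hphi hf_smooth Ox.
  have e4 : dirac_op (dirac_op Phi) x = cl_scalar (lam ^+ 2 * phi x) + phi x *: cl_scalar (v x).
    have := hphi_schr x Ox; rewrite /laplacian opprK clmul_scalarl => /eqP; rewrite subr_eq => /eqP ->.
    by rewrite -!blade_scalar !bladeZ (mulrC (v x)).
  have e5 : dirac_op f x = cl_scalar (v x) - clmul (f x) (f x).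
    by rewrite -(hf_riccati x Ox) addrK.
  have e6 : clmul (w x) (f x) = - clmul (clmul (X x) (f x)) bb.
    by rewrite /w clmulA (anticomm _ hn_even (hf_vec x Ox)) clmulNr -clmulA.
  have e7 : phi x *: a = clmul (cl_scalar (lam ^+ 2 * phi x)) bb.
    rewrite clmul_scalarl aE /bb !bladeZ; congr (blade _ _); rewrite expr2; field.
    exact: hlam.
  rewrite e1 e6 e7 e2 e3 e4 e5 /X /= [clmul (dirac_op Phi x - _) _]clmulBl clmulZl.
  have -> : forall Y Z, - clmul Y bb + clmul Z bb = clmul (- Y + Z) bb by move=> Y Z; rewrite clmulDl clmulNl.
  congr (clmul _ bb).
  move: (cl_scalar (lam ^+ 2 * phi x) : Cl R n) (cl_scalar (v x) : Cl R n) (clmul (f x) (f x)) (clmul (dirac_op Phi x) (f x)) (phi x) => S cv ff P c.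
  apply/ffunP => A; rewrite !(ffB, ffD, ffN, ffZ); ring.
have hd0 : decomposition Omega f lam phi g h.
  split.
  - exact: sg.
  - exact: sh.
  - move=> x Ox; rewrite /rmul /g (dirac_scale_cst hOmega _ sPw Ox) (dirac_add hOmega sPhi sw Ox) KEY //.
    rewrite clmulZl !clmulDl !clmulDr wa /Phi !clmul_scalarl /X /=.
    move: (dirac_op Phi x) (clmul (w x) (f x)) (f x) (phi x) => D0 W0 F0 p0.
    apply/ffunP => A; rewrite !(ffB, ffD, ffN, ffZ) ff0; field; rewrite ?two_neq0 //.
  - move=> x Ox; rewrite /rmul /h (dirac_scale_cst hOmega _ sPw' Ox) (dirac_sub hOmega sPhi sw Ox) KEY //.
    rewrite clmulZl !clmulDl !clmulDr !clmulNl !clmulNr wa /Phi !clmul_scalarl /X /=.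
    move: (dirac_op Phi x) (clmul (w x) (f x)) (f x) (phi x) => D0 W0 F0 p0.
    apply/ffunP => A; rewrite !(ffB, ffD, ffN, ffZ) ff0; field; rewrite ?two_neq0 //.
  - move=> x Ox; rewrite /g /h /Phi /=.
    move: (cl_scalar (phi x) : Cl R n) (w x) => P0 W0.
    apply/ffunP => A; rewrite !(ffB, ffD, ffN, ffZ); field; rewrite ?two_neq0 //.
exists g, h; split; first exact: hd0.
move=> g' h' hd x Ox.
exact: (uniq_dec hOmega hlam hn_even hn_half hd hd0 Ox).
Qed.
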